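(* Let $1<a<b$ be coprime integers and let $D\subseteq G$ be a subdiagram. Then \[ Q(\mathbf{1}_D)=|D|-\#\{(i,j)\in D\times U_D:\ i\to j\}. \]
   Context: Fix coprime integers $1<a<b$. Work in the grid $\mathbb{Z}^2$ ($+x$ east, $+y$ north). Let $g:\mathbb{Z}^2\to\mathbb{Z}$, $g(x,y)=ab-ax-by$, and $G=\{(x,y)\in\mathbb{Z}_{\ge1}^2: g(x,y)>0\}$. A subdiagram is a subset $D\subseteq G$ such that whenever $(x,y)\in D$, $(x',y')\in G$, $x'\le x$, $y'\le y$, we have $(x',y')\in D$. $\mathbf{1}_D\in\mathbb{R}^G$ is the indicator vector of $D$. $K(d)=\mathbf{1}_{d\ge0}-\mathbf{1}_{d\ge a}-\mathbf{1}_{d\ge b}+\mathbf{1}_{d\ge a+b}$, and $Q(\mathbf{n})=\sum_{i,j\in G}K(g(j)-g(i))\,n_in_j$ for $\mathbf{n}\in\mathbb{R}^G$. For cells $i,j\in\mathbb{Z}^2$, write $i\to j$ iff $0\le g(j)-g(i)<a$. For a subdiagram $D$, define \[ U_D=\{(x,y)\in\mathbb{Z}^2:\ (x,y)\notin D\ \text{and}\ (x,y-1)\in D\cup(\mathbb{Z}_{\ge1}\times\mathbb{Z}_{\le0})\}. \] *)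

(* Defs.v *)
From Stdlib Require Import ZArith List Lia.
Import ListNotations.
Open Scope Z_scope.

(* Cells of the grid Z^2: (x, y), +x east, +y north. *)
Definition cell : Type := (Z * Z)%type.

Definition g (a b : Z) (c : cell) : Z := a * b - a * fst c - b * snd c.

Definition inG (a b : Z) (c : cell) : Prop :=
  1 <= fst c /\ 1 <= snd c /\ 0 < g a b c.

Definition inGb (a b : Z) (c : cell) : bool :=
  (1 <=? fst c) && (1 <=? snd c) && (0 <? g a b c).

(* Duplicate-free enumeration of G: G lies in the box [1,b] x [1,a]
   (indeed ax < ab and by < ab there), filtered by the defining condition. *)
Definition zrange (lo n : Z) : list Z :=
  map (fun k => lo + Z.of_nat k) (seq 0 (Z.to_nat n)).

Definition Gcells (a b : Z) : list cell :=
  filter (inGb a b) (list_prod (zrange 1 b) (zrange 1 a)).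

Definition subdiagram (a b : Z) (D : cell -> bool) : Prop :=
  (forall c, D c = true -> inG a b c) /\
  (forall c c', D c = true -> inG a b c' ->
     fst c' <= fst c -> snd c' <= snd c -> D c' = true).

Definition indicator (D : cell -> bool) (c : cell) : Z := if D c then 1 else 0.

Definition cardD (a b : Z) (D : cell -> bool) : nat :=
  length (filter D (Gcells a b)).

Definition ind (P : bool) : Z := if P then 1 else 0.

Definition K (a b d : Z) : Z :=
  ind (0 <=? d) - ind (a <=? d) - ind (b <=? d) + ind (a + b <=? d).

Definition sumZ {T} (f : T -> Z) (l : list T) : Z :=
  fold_right (fun t acc => f t + acc) 0 l.

Definition Q (a b : Z) (n : cell -> Z) : Z :=
  sumZ (fun i => sumZ (fun j => K a b (g a b j - g a b i) * n i * n j) (Gcells a b))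
       (Gcells a b).

Definition arrow (a b : Z) (i j : cell) : Prop :=
  0 <= g a b j - g a b i < a.

Definition strip (c : cell) : Prop := 1 <= fst c /\ snd c <= 0.

(* U_D: cells directly above the top of each column of D ∪ strip. *)
Definition inU (D : cell -> bool) (c : cell) : Prop :=
  ~ (D c = true \/ strip c) /\
  (D (fst c, snd c - 1) = true \/ strip (fst c, snd c - 1)).

(* Main.v *)
Require Import Defs.
From Stdlib Require Import ZArith List Lia Permutation FinFun.
Import ListNotations.
Open Scope Z_scope. Open Scope bool_scope.

Lemma sumZ_app {T} (f : T -> Z) l1 l2 : sumZ f (l1 ++ l2) = sumZ f l1 + sumZ f l2.
Proof. induction l1; simpl; lia. Qed.

Lemma sumZ_map {T U} (f : U -> Z) (h : T -> U) l : sumZ f (map h l) = sumZ (fun x => f (h x)) l.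
Proof. induction l; simpl; auto. rewrite IHl; reflexivity. Qed.

Lemma sumZ_ext_in {T} (f h : T -> Z) l : (forall x, In x l -> f x = h x) -> sumZ f l = sumZ h l.
Proof. induction l; simpl; intros H; auto. rewrite H, IHl; auto. Qed.

Lemma sumZ_add {T} (f h : T -> Z) l : sumZ (fun x => f x + h x) l = sumZ f l + sumZ h l.
Proof. induction l; simpl; lia. Qed.

Lemma sumZ_sub {T} (f h : T -> Z) l : sumZ (fun x => f x - h x) l = sumZ f l - sumZ h l.
Proof. induction l; simpl; lia. Qed.

Lemma sumZ_zero {T} (l : list T) : sumZ (fun _ => 0) l = 0.
Proof. induction l; simpl; lia. Qed.

Lemma sumZ_prod {T U} (F : T * U -> Z) l1 l2 :
  sumZ F (list_prod l1 l2) = sumZ (fun i => sumZ (fun j => F (i, j)) l2) l1.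
Proof. induction l1; simpl; auto. rewrite sumZ_app, sumZ_map, IHl1; reflexivity. Qed.

Lemma length_filter_sumZ {T} (f : T -> bool) l :
  Z.of_nat (length (filter f l)) = sumZ (fun x => ind (f x)) l.
Proof.
  induction l as [|a l IHl]; [reflexivity|].
  change (sumZ (fun x => ind (f x)) (a :: l)) with (ind (f a) + sumZ (fun x => ind (f x)) l).
  cbn [filter]. destruct (f a); cbn [length ind]; rewrite ?Nat2Z.inj_succ; lia.
Qed.

Lemma sumZ_filter_nz {T} (F : T -> Z) l :
  sumZ F l = sumZ F (filter (fun x => negb (F x =? 0)) l).
Proof.
  induction l; simpl; auto. rewrite IHl.
  destruct (F a =? 0) eqn:E; simpl; [apply Z.eqb_eq in E; lia | reflexivity].
Qed.

Lemma sumZ_perm {T} (F : T -> Z) l1 l2 : Permutation l1 l2 -> sumZ F l1 = sumZ F l2.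
Proof. induction 1; simpl; lia. Qed.

Lemma sumZ_support {T} (F : T -> Z) l1 l2 : NoDup l1 -> NoDup l2 ->
  (forall x, F x <> 0 -> (In x l1 <-> In x l2)) -> sumZ F l1 = sumZ F l2.
Proof.
  intros N1 N2 H. rewrite (sumZ_filter_nz F l1), (sumZ_filter_nz F l2).
  apply sumZ_perm. apply NoDup_Permutation; try apply NoDup_filter; auto.
  intro x. rewrite !filter_In. split; intros [Hi Hn]; split; auto;
  apply Bool.negb_true_iff, Z.eqb_neq in Hn; apply (H x Hn); auto.
Qed.

Lemma NoDup_prod {T U} (l1 : list T) (l2 : list U) :
  NoDup l1 -> NoDup l2 -> NoDup (list_prod l1 l2).
Proof.
  intros N1 N2. induction N1; simpl. constructor.
  apply NoDup_app; auto.
  - apply Injective_map_NoDup; auto. intros u v E; inversion E; auto.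
  - intros [p q] Hin Hin'. apply in_map_iff in Hin as [y [E _]]. inversion E; subst.
    apply in_prod_iff in Hin' as [Hx _]. contradiction.
Qed.

Lemma in_zrange lo n k : 0 <= n -> (In k (zrange lo n) <-> lo <= k < lo + n).
Proof.
  intros Hn. unfold zrange. rewrite in_map_iff. split.
  - intros [m [<- Hm]]. apply in_seq in Hm. lia.
  - intros Hk. exists (Z.to_nat (k - lo)). split. lia. apply in_seq. lia.
Qed.

Lemma NoDup_zrange lo n : NoDup (zrange lo n).
Proof.
  unfold zrange. apply Injective_map_NoDup. intros u v E; lia. apply seq_NoDup.
Qed.

Lemma inGb_spec a b c : inGb a b c = true <-> inG a b c.
Proof.
  unfold inGb, inG. rewrite !Bool.andb_true_iff, Z.leb_le, Z.leb_le, Z.ltb_lt. tauto.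
Qed.

Lemma in_Gcells a b c : 0 < a -> 0 < b -> (In c (Gcells a b) <-> inG a b c).
Proof.
  intros Ha Hb. unfold Gcells. rewrite filter_In, inGb_spec. destruct c as [x y].
  split; [tauto|]. intros H; split; [|exact H].
  apply in_prod_iff. rewrite !in_zrange by lia. unfold inG, g in H; simpl in H. nia.
Qed.

Lemma NoDup_Gcells a b : NoDup (Gcells a b).
Proof. apply NoDup_filter, NoDup_prod; apply NoDup_zrange. Qed.

Definition stripb (c : cell) : bool := (1 <=? fst c) && (snd c <=? 0).
Definition south (c : cell) : cell := (fst c, snd c - 1).
Definition inUb (D : cell -> bool) (c : cell) : bool :=
  negb (D c || stripb c) && (D (south c) || stripb (south c)).
Definition arrowb a b (i j : cell) : bool :=
  (0 <=? g a b j - g a b i) && (g a b j - g a b i <? a).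

Lemma stripb_spec c : stripb c = true <-> strip c.
Proof. unfold stripb, strip. rewrite Bool.andb_true_iff, !Z.leb_le. tauto. Qed.

Lemma inUb_spec D c : inUb D c = true <-> inU D c.
Proof.
  unfold inUb, inU. rewrite Bool.andb_true_iff, Bool.negb_true_iff, !Bool.orb_true_iff.
  rewrite <- !stripb_spec. unfold south.
  destruct (D c), (stripb c); intuition discriminate.
Qed.

Lemma arrowb_spec a b i j : arrowb a b i j = true <-> arrow a b i j.
Proof. unfold arrowb, arrow. rewrite Bool.andb_true_iff, Z.leb_le, Z.ltb_lt. tauto. Qed.

Lemma g_south a b c : g a b (south c) = g a b c + b.
Proof. unfold g, south; simpl. ring. Qed.

Lemma row1 a b i : 1 < a -> a < b -> inG a b i ->
  sumZ (fun j => ind (arrowb a b i j && (snd j =? 1) && inGb a b j)) (Gcells a b) = 1.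
Proof.
  intros Ha Hab Hi. destruct i as [xi yi]. unfold inG, g in Hi; simpl in Hi.
  set (q := (b * (yi - 1)) / a).
  assert (Hq1 : a * q <= b * (yi - 1)) by (apply Z.mul_div_le; lia).
  assert (Hq2 : b * (yi - 1) < a * q + a).
  { pose proof (Z.div_mod (b * (yi - 1)) a ltac:(lia)).
    pose proof (Z.mod_pos_bound (b * (yi - 1)) a ltac:(lia)). fold q in H. lia. }
  assert (Hq0 : 0 <= q) by (apply Z.div_pos; nia).
  set (j0 := (xi + q, 1) : cell).
  rewrite (sumZ_support _ (Gcells a b) [j0]).
  - simpl. unfold ind. replace (arrowb a b (xi, yi) j0) with true.
    replace (inGb a b j0) with true. simpl. reflexivity.
    + symmetry. apply inGb_spec. unfold inG, g, j0; simpl. nia.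
    + symmetry. apply arrowb_spec. unfold arrow, g, j0; simpl. nia.
  - apply NoDup_Gcells.
  - constructor; [simpl; tauto | constructor].
  - intros [x y] Hne. unfold ind in Hne.
    destruct (arrowb a b (xi, yi) (x, y)) eqn:E1; [|simpl in Hne; lia].
    destruct (snd (x, y) =? 1) eqn:E2; [|simpl in Hne; lia].
    destruct (inGb a b (x, y)) eqn:E3; [|simpl in Hne; lia].
    apply arrowb_spec in E1. apply Z.eqb_eq in E2. apply inGb_spec in E3.
    simpl in E2; subst y.
    rewrite in_Gcells by lia. split; intros _; [|exact E3].
    left. unfold j0. f_equal.
    unfold arrow, g in E1; simpl in E1.
    assert (x - (xi + q) < 1) by nia. assert (x - (xi + q) > -1) by nia. lia.
Qed.

Definition Bt a b D (i j : cell) : Z :=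
  ind (D j && (b <=? g a b j - g a b i) && (g a b j - g a b i <? a + b)).

Lemma reindex a b D i : 1 < a -> a < b -> subdiagram a b D -> inG a b i ->
  sumZ (Bt a b D i) (Gcells a b) = sumZ (fun j => Bt a b D i (south j)) (Gcells a b).
Proof.
  intros Ha Hab [HD _] Hi.
  rewrite <- (sumZ_map (Bt a b D i) south).
  apply sumZ_support.
  - apply NoDup_Gcells.
  - apply Injective_map_NoDup; [|apply NoDup_Gcells].
    intros [u1 u2] [v1 v2] E; unfold south in E; simpl in E. inversion E.
    f_equal; lia.
  - intros x Hne. unfold Bt, ind in Hne.
    destruct (D x) eqn:E1; [|simpl in Hne; lia].
    destruct (b <=? g a b x - g a b i) eqn:E2; [|simpl in Hne; lia].
    apply Z.leb_le in E2. apply HD in E1.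
    split; intros _.
    + apply in_map_iff. exists (fst x, snd x + 1). split.
      * unfold south; simpl. destruct x; f_equal; simpl; lia.
      * apply in_Gcells; try lia. destruct x as [x1 x2].
        unfold inG, g in *; simpl in *. lia.
    + apply in_Gcells; auto; lia.
Qed.

Lemma pointwise a b D i j : 1 < a -> a < b -> subdiagram a b D -> inG a b i ->
  D i = true -> inG a b j ->
  ind (D j && arrowb a b i j) - Bt a b D i (south j)
  + ind (D i && inUb D j && arrowb a b i j)
  = ind (arrowb a b i j && (snd j =? 1) && inGb a b j).
Proof.
  intros Ha Hab [HD HC] Hi HDi Hj.
  assert (H1 : D j = true -> snd j <> 1 -> D (south j) = true).
  { intros Dj Hy. apply (HC j); auto; unfold south; simpl; try lia.
    destruct j as [x y]; unfold inG, g in *; simpl in *; lia. }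
  assert (H2 : D (south j) = true -> snd j >= 2).
  { intros Ds. apply HD in Ds. unfold inG, south in Ds; simpl in Ds; lia. }
  assert (Hg : inGb a b j = true) by (apply inGb_spec; auto).
  rewrite Hg, HDi. unfold Bt. rewrite g_south.
  unfold inUb, stripb, south in *. simpl.
  destruct j as [x y]; unfold inG in Hj; simpl in *.
  replace (1 <=? x) with true by (symmetry; apply Z.leb_le; lia).
  replace (y <=? 0) with false by (symmetry; apply Z.leb_gt; lia).
  unfold arrowb.
  destruct (D (x, y)) eqn:Dj, (D (x, y - 1)) eqn:Ds;
  destruct (Z.eqb_spec y 1); destruct (Z.leb_spec (y - 1) 0);
  destruct (Z.leb_spec 0 (g a b (x, y) - g a b i));
  destruct (Z.ltb_spec (g a b (x, y) - g a b i) a);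
  destruct (Z.leb_spec b (g a b (x, y) + b - g a b i));
  destruct (Z.ltb_spec (g a b (x, y) + b - g a b i) (a + b));
  simpl; unfold ind; try lia;
  try (specialize (H1 eq_refl); lia); try (specialize (H2 eq_refl); lia).
Qed.

Lemma per_i a b D i : 1 < a -> a < b -> subdiagram a b D -> D i = true ->
  sumZ (fun j => K a b (g a b j - g a b i) * indicator D i * indicator D j) (Gcells a b)
  = 1 - sumZ (fun j => ind (D i && inUb D j && arrowb a b i j)) (Gcells a b).
Proof.
  intros Ha Hab Hs HDi.
  assert (Hi : inG a b i) by (apply (proj1 Hs); auto).
  rewrite (sumZ_ext_in _ (fun j => ind (D j && arrowb a b i j) - Bt a b D i j)).
  2:{ intros j _. unfold indicator, Bt, K, arrowb. rewrite HDi.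
      destruct (D j); simpl;
      destruct (Z.leb_spec 0 (g a b j - g a b i));
      destruct (Z.leb_spec a (g a b j - g a b i));
      destruct (Z.leb_spec b (g a b j - g a b i));
      destruct (Z.leb_spec (a + b) (g a b j - g a b i));
      destruct (Z.ltb_spec (g a b j - g a b i) a);
      destruct (Z.ltb_spec (g a b j - g a b i) (a + b)); simpl; unfold ind; lia. }
  rewrite sumZ_sub, reindex by auto.
  rewrite <- (row1 a b i) by auto.
  rewrite <- (sumZ_ext_in (fun j => ind (D j && arrowb a b i j) - Bt a b D i (south j)
             + ind (D i && inUb D j && arrowb a b i j))
             (fun j => ind (arrowb a b i j && (snd j =? 1) && inGb a b j))).
  2:{ intros j Hj. apply pointwise; auto. apply in_Gcells in Hj; auto; lia. }
  rewrite sumZ_add, sumZ_sub. lia.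
Qed.

Theorem lemma3p1 (a b : Z) (D : cell -> bool) :
  1 < a -> a < b -> Z.gcd a b = 1 -> subdiagram a b D ->
  exists l : list (cell * cell),
    NoDup l /\
    (forall p : cell * cell,
        In p l <-> (D (fst p) = true /\ inU D (snd p) /\ arrow a b (fst p) (snd p))) /\
    Q a b (indicator D) = Z.of_nat (cardD a b D) - Z.of_nat (length l).
Proof.
  intros Ha Hab _ Hs.
  set (P := fun p : cell * cell => D (fst p) && inUb D (snd p) && arrowb a b (fst p) (snd p)).
  exists (filter P (list_prod (Gcells a b) (Gcells a b))). split; [|split].
  - apply NoDup_filter, NoDup_prod; apply NoDup_Gcells.
  - intros [i j]. rewrite filter_In. unfold P; simpl.
    rewrite !Bool.andb_true_iff, inUb_spec, arrowb_spec.
    split; [tauto|]. intros [HDi [HU Har]]. split; [|tauto].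
    apply in_prod_iff. rewrite !in_Gcells by lia.
    assert (Hi : inG a b i) by (apply (proj1 Hs); auto).
    split; auto.
    destruct HU as [HU1 HU2].
    assert (Hx : 1 <= fst j).
    { destruct HU2 as [Hd | Hst].
      - apply (proj1 Hs) in Hd. unfold inG in Hd; simpl in Hd; lia.
      - unfold strip in Hst; simpl in Hst; lia. }
    assert (Hy : 1 <= snd j).
    { destruct (Z.le_gt_cases 1 (snd j)); auto. exfalso. apply HU1. right.
      unfold strip; lia. }
    unfold inG, arrow in *. lia.
  - unfold cardD. rewrite !length_filter_sumZ, sumZ_prod. unfold Q.
    rewrite <- sumZ_sub.
    apply sumZ_ext_in. intros i Hi. unfold P; cbn [fst snd].
    destruct (D i) eqn:HDi.
    + rewrite per_i by auto. unfold indicator; rewrite HDi. reflexivity.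
    + rewrite (sumZ_ext_in (fun j => K a b (g a b j - g a b i) * indicator D i * indicator D j) (fun _ => 0) (Gcells a b))
        by (intros; unfold indicator; rewrite HDi; ring).
      rewrite (sumZ_ext_in (fun j => ind (false && inUb D j && arrowb a b i j)) (fun _ => 0) (Gcells a b))
        by (intros; reflexivity).
      rewrite !sumZ_zero. reflexivity.
Qed.
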